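(* Let $a,b,c$ be the vertices of a nondegenerate triangle in $\mathbb{R}^2$, and let $d$ be a point of the closed triangle $\triangle abc$ not lying on the line $ab$. Let $e$ and $f$ be the intersections of the line through $d$ parallel to $ab$ with the segments $ac$ and $bc$ respectively. Then the area of the triangle $\triangle abd$ (the discarded region) is larger than the area of $\triangle ade \cup \triangle bdf$ (the preserved region).
   Context: This describes one step of QuickHull on a planar set: $ab$ is an edge of the current partial hull, $c$ is the intersection of the lines through $a$ and $b$ beyond which no input point lies (so remaining candidate points lie in $\triangle abc$), $d$ is the point farthest from line $ab$ on the outer side, which is inserted into the partial hull; points in $\triangle abd$ are then discarded, while the points in $\triangle ade$ and $\triangle bdf$ are preserved for later steps. *)

(* Defs.v *)
From mathcomp Require Import all_boot all_order all_algebra.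
Set Implicit Arguments. Unset Strict Implicit. Unset Printing Implicit Defensive.
Import Order.TTheory GRing.Theory Num.Theory.
Local Open Scope ring_scope.

Definition point (R : realFieldType) := (R * R)%type.

Definition orient (R : realFieldType) (p q r : point R) : R :=
  (q.1 - p.1) * (r.2 - p.2) - (q.2 - p.2) * (r.1 - p.1).

Definition tri_area (R : realFieldType) (p q r : point R) : R :=
  `|orient p q r| / 2.

Definition nondeg_triangle (R : realFieldType) (p q r : point R) : Prop :=
  orient p q r != 0.

Definition on_line (R : realFieldType) (p q x : point R) : Prop :=
  orient p q x = 0.

Definition in_closed_triangle (R : realFieldType) (p q r x : point R) : Prop :=
  exists l1 l2 l3 : R, [/\ 0 <= l1, 0 <= l2, 0 <= l3, l1 + l2 + l3 = 1 &
    x = (l1 * p.1 + l2 * q.1 + l3 * r.1, l1 * p.2 + l2 * q.2 + l3 * r.2)].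

Definition on_segment (R : realFieldType) (p q x : point R) : Prop :=
  exists t : R, [/\ 0 <= t, t <= 1 &
    x = (p.1 + t * (q.1 - p.1), p.2 + t * (q.2 - p.2))].

Definition on_parallel (R : realFieldType) (p q d x : point R) : Prop :=
  (q.1 - p.1) * (x.2 - d.2) - (q.2 - p.2) * (x.1 - d.1) = 0.

(* Main.v *)
Require Import Defs.
From mathcomp Require Import all_boot all_order all_algebra.
From mathcomp Require Import ring lra.
Import Order.TTheory GRing.Theory Num.Theory.
Local Open Scope ring_scope.

Theorem lemma1 (R : realFieldType) (a b c d e f : point R) :
  nondeg_triangle a b c ->
  in_closed_triangle a b c d ->
  ~ on_line a b d ->
  on_segment a c e -> on_parallel a b d e ->
  on_segment b c f -> on_parallel a b d f ->
  tri_area a d e + tri_area b d f < tri_area a b d.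
Proof.
case: a => a1 a2; case: b => b1 b2; case: c => c1 c2.
rewrite /nondeg_triangle /on_line /on_parallel /tri_area.
move=> hD [l1 [l2 [l3 [h1 h2 h3 hs ->]]]] hnl [t [t0 t1 ->]] hpe [s [s0 s1 ->]] hpf.
move: hD hnl hpe hpf; rewrite /orient /=.
set D := (b1 - a1) * (c2 - a2) - (b2 - a2) * (c1 - a1).
have -> : l1 = 1 - l2 - l3 by lra.
move=> hD hnl hpe hpf.
have hd : (b1 - a1) * ((1 - l2 - l3) * a2 + l2 * b2 + l3 * c2 - a2) -
   (b2 - a2) * ((1 - l2 - l3) * a1 + l2 * b1 + l3 * c1 - a1) = l3 * D.
  by rewrite /D; ring.
rewrite hd in hnl *.
have l3n0 : l3 != 0 by apply/eqP => h; apply: hnl; rewrite h mul0r.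
have l3p : 0 < l3 by rewrite lt0r l3n0.
have ht : (t - l3) * D = 0 by rewrite -hpe /D; ring.
have hs' : (s - l3) * D = 0 by rewrite -hpf /D; ring.
move: ht hs' => /eqP + /eqP; rewrite !mulf_eq0 (negbTE hD) !orbF !subr_eq0 => /eqP -> /eqP ->.
have -> : ((1 - l2 - l3) * a1 + l2 * b1 + l3 * c1 - a1) * (a2 + l3 * (c2 - a2) - a2) -
   ((1 - l2 - l3) * a2 + l2 * b2 + l3 * c2 - a2) * (a1 + l3 * (c1 - a1) - a1)
   = (l2 * l3) * D by rewrite /D; ring.
have -> : ((1 - l2 - l3) * a1 + l2 * b1 + l3 * c1 - b1) * (b2 + l3 * (c2 - b2) - b2) -
   ((1 - l2 - l3) * a2 + l2 * b2 + l3 * c2 - b2) * (b1 + l3 * (c1 - b1) - b1)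
   = - (((1 - l2 - l3) * l3) * D) by rewrite /D; ring.
have h1' : 0 <= 1 - l2 - l3 by lra.
rewrite normrN !normrM (ger0_norm h2) (ger0_norm h1') (ger0_norm (ltW l3p)).
have hDp : 0 < `|D| by rewrite normr_gt0.
have Xp : 0 < l3 * `|D| by apply: mulr_gt0.
have -> : l2 * l3 * `|D| / 2 + (1 - l2 - l3) * l3 * `|D| / 2 = (1 - l3) * (l3 * `|D| / 2) by ring.
rewrite -[X in _ < X]mul1r ltr_pM2r; first by lra.
by apply: divr_gt0.
Qed.
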